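(* Let $x>0$ and $p\in\mathbb{R}$. (i) If $p\in[0,1/2]$, then $W_p(x,1)\ge \hat{A}_p(x,1)$. (ii) If $p\notin(0,1/2)$, then $W_p(x,1)\le \hat{A}_p(x,1)$.
   Context: For $x>0$, $x\ne 1$ and $p\ne 0$: $\hat{A}_p(x,1)=\frac{p(x^p+1)(x-1)}{2(x^p-1)}$, with $\hat A_p(1,1)=1$ and $\hat{A}_0(x,1)=\frac{x-1}{\log x}$ (limiting value). The Wigner--Yanase--Dyson function for $p\in\mathbb{R}\setminus\{0,1\}$, $x\ne 1$ is $W_p(x,1)=\frac{p(1-p)(x-1)^2}{(x^p-1)(x^{1-p}-1)}$, with $W_p(1,1)=1$ and $W_0(x,1)=W_1(x,1)=\frac{x-1}{\log x}$ (limiting value). *)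

(* Defs.v *)
From Stdlib Require Import Reals Lra.
Open Scope R_scope.

(* \hat A_p(x,1), for x > 0:
   = 1 if x = 1;
   = (x-1)/ln x if p = 0 (limiting value);
   = p (x^p+1)(x-1) / (2 (x^p-1)) otherwise. *)
Definition Ahat (p x : R) : R :=
  if Req_EM_T x 1 then 1
  else if Req_EM_T p 0 then (x - 1) / ln x
  else p * (Rpower x p + 1) * (x - 1) / (2 * (Rpower x p - 1)).

(* Wigner--Yanase--Dyson function W_p(x,1), for x > 0:
   = 1 if x = 1;
   = (x-1)/ln x if p = 0 or p = 1 (limiting value);
   = p(1-p)(x-1)^2 / ((x^p-1)(x^(1-p)-1)) otherwise. *)
Definition WYD (p x : R) : R :=
  if Req_EM_T x 1 then 1
  else if Req_EM_T p 0 then (x - 1) / ln x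
  else if Req_EM_T p 1 then (x - 1) / ln x
  else p * (1 - p) * (x - 1) ^ 2 / ((Rpower x p - 1) * (Rpower x (1 - p) - 1)).

(* Main.v *)
Require Import Defs.
From Stdlib Require Import Reals Lra Psatz.
From Coquelicot Require Import Coquelicot.
Open Scope R_scope.

Definition EE (t : R) := exp t - exp (- t).
Definition CC (t : R) := exp t + exp (- t).

Lemma exp_le_mono a b : a <= b -> exp a <= exp b.
Proof. intros [H|H]; [left; now apply exp_increasing| subst; lra]. Qed.

Lemma CC_mono v w : 0 <= v <= w -> CC v <= CC w.
Proof.
  intros [h1 h2]. unfold CC.
  assert (E1 : exp v <= exp w) by (apply exp_le_mono; lra).
  assert (E2 : exp (-w) * exp (-v) <= 1).
  { rewrite <- exp_plus. rewrite <- exp_0. apply exp_le_mono; lra. }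
  assert (exp (-w) * exp w = 1) by (rewrite <- exp_plus; replace (-w+w) with 0 by ring; apply exp_0).
  assert (exp (-v) * exp v = 1) by (rewrite <- exp_plus; replace (-v+v) with 0 by ring; apply exp_0).
  assert (0 < exp w) by apply exp_pos. assert (0 < exp v) by apply exp_pos.
  assert (0 < exp (-w)) by apply exp_pos. assert (0 < exp (-v)) by apply exp_pos.
  nra.
Qed.

Definition GG (b t : R) := b * EE t - EE (b * t).

Lemma GG_deriv b t : derivable_pt_lim (GG b) t (b * (CC t - CC (b * t))).
Proof.
  apply is_derive_Reals. unfold GG, EE, CC.
  auto_derive; auto. ring.
Qed.

Lemma GG0 b : GG b 0 = 0.
Proof. unfold GG, EE. rewrite Rmult_0_r, Ropp_0. ring. Qed.

Lemma key1 b s : 0 < s -> 0 <= b <= 1 -> 0 <= GG b s.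
Proof.
  intros hs hb.
  destruct (MVT_cor2 (GG b) (fun t => b * (CC t - CC (b * t))) 0 s hs) as [c [Hc Hc2]].
  { intros; apply GG_deriv. }
  rewrite GG0 in Hc.
  assert (CC (b*c) <= CC c) by (apply CC_mono; nra).
  rewrite Rminus_0_r in Hc. rewrite Hc. apply Rmult_le_pos; [apply Rmult_le_pos|]; lra.
Qed.

Lemma key2 b s : 0 < s -> 1 <= b -> GG b s <= 0.
Proof.
  intros hs hb.
  destruct (MVT_cor2 (GG b) (fun t => b * (CC t - CC (b * t))) 0 s hs) as [c [Hc Hc2]].
  { intros; apply GG_deriv. }
  rewrite GG0 in Hc.
  assert (CC c <= CC (b*c)) by (apply CC_mono; nra).
  rewrite Rminus_0_r in Hc. rewrite Hc. assert (0 <= b * (CC (b*c) - CC c) * s) by (apply Rmult_le_pos; [apply Rmult_le_pos|]; lra). lra.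
Qed.

Lemma GG_odd_s b s : GG b (- s) = - GG b s.
Proof. unfold GG, EE. replace (b * - s) with (- (b*s)) by ring. rewrite !Ropp_involutive. ring. Qed.
Lemma GG_odd_b b s : GG (- b) s = - GG b s.
Proof. unfold GG, EE. replace (- b * s) with (- (b*s)) by ring. rewrite !Ropp_involutive. ring. Qed.

Lemma sgn1 b s : 0 <= b <= 1 -> 0 <= s * GG b s.
Proof.
  intros hb. destruct (Rtotal_order s 0) as [h|[h|h]].
  - replace s with (- (-s)) by ring. rewrite GG_odd_s.
    pose proof (key1 b (-s) ltac:(lra) hb). nra.
  - subst. lra.
  - pose proof (key1 b s h hb). nra.
Qed.

Lemma sgn2 b s : 1 <= b -> s * GG b s <= 0.
Proof.
  intros hb. destruct (Rtotal_order s 0) as [h|[h|h]].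
  - replace s with (- (-s)) by ring. rewrite GG_odd_s.
    pose proof (key2 b (-s) ltac:(lra) hb). nra.
  - subst. lra.
  - pose proof (key2 b s h hb). nra.
Qed.

Lemma exp_m1_sign c : c <> 0 -> 0 < c * (exp c - 1).
Proof.
  intros hc. destruct (Rtotal_order c 0) as [h|[h|h]]; [|contradiction|].
  - assert (exp c < exp 0) by (apply exp_increasing; lra). rewrite exp_0 in H. nra.
  - assert (exp 0 < exp c) by (apply exp_increasing; lra). rewrite exp_0 in H. nra.
Qed.

Definition HH (t : R) := t * CC t - EE t.

Lemma HH_deriv t : derivable_pt_lim HH t (t * EE t).
Proof. apply is_derive_Reals. unfold HH, EE, CC. auto_derive; auto. ring. Qed.

Lemma EE_sign c : 0 <= c * EE c.
Proof.
  unfold EE. destruct (Rle_dec 0 c).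
  - assert (exp (-c) <= exp c) by (apply exp_le_mono; lra). nra.
  - assert (exp c <= exp (-c)) by (apply exp_le_mono; lra). nra.
Qed.

Lemma HH_pos s : 0 < s -> 0 <= HH s.
Proof.
  intros hs.
  destruct (MVT_cor2 HH (fun t => t * EE t) 0 s hs) as [c [Hc Hc2]].
  { intros; apply HH_deriv. }
  assert (HH 0 = 0) by (unfold HH, EE, CC; rewrite Ropp_0; ring).
  rewrite H, !Rminus_0_r in Hc. rewrite Hc. apply Rmult_le_pos; [apply EE_sign|lra].
Qed.

Lemma HH_sign s : 0 <= s * HH s.
Proof.
  destruct (Rtotal_order s 0) as [h|[h|h]].
  - assert (HH (-s) = - HH s) by (unfold HH, EE, CC; rewrite Ropp_involutive; ring).
    pose proof (HH_pos (-s) ltac:(lra)). nra.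
  - subst; lra.
  - pose proof (HH_pos s h). nra.
Qed.

Lemma alg p u X Y (hp0 : p <> 0) (hp1 : p <> 1) (hu : u <> 0) (hX : X <> 1) (hY : Y <> 1)
  (ha : 0 < p * u * (X - 1)) (hb : 0 < u * (X * Y - 1)) (hc : 0 < (1 - p) * u * (Y - 1)) :
  let K := 2 * (1 - p) * (X * Y - 1) - (X + 1) * (Y - 1) in
  let W := p * (1 - p) * (X * Y - 1) ^ 2 / ((X - 1) * (Y - 1)) in
  let A := p * (X + 1) * (X * Y - 1) / (2 * (X - 1)) in
  (0 <= (1 - p) * u * K -> W >= A) /\ ((1 - p) * u * K <= 0 -> W <= A).
Proof.
  intros K W A.
  set (T := p * (X * Y - 1) * K * (X - 1) * (Y - 1)).
  assert (HWA : W - A = T / (2 * ((X - 1) * (Y - 1)) ^ 2)).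
  { unfold W, A, T, K. field. split; intro; apply hX || apply hY; lra. }
  assert (HT : T * ((1 - p) ^ 2 * u ^ 4) = (p * u * (X - 1)) * (u * (X * Y - 1)) * ((1 - p) * u * (Y - 1)) * ((1 - p) * u * K)).
  { unfold T. ring. }
  assert (Hc : 0 < (1 - p) ^ 2 * u ^ 4).
  { assert (1 - p <> 0) by lra. apply Rsqr_pos_lt in H. unfold Rsqr in H.
    assert (0 < u * u) by (apply Rsqr_pos_lt in hu; exact hu).
    replace ((1 - p) ^ 2 * u ^ 4) with (((1-p)*(1-p)) * ((u*u)*(u*u))) by ring.
    apply Rmult_lt_0_compat; [|apply Rmult_lt_0_compat]; lra. }
  assert (Hd : 0 < 2 * ((X - 1) * (Y - 1)) ^ 2).
  { assert ((X - 1) * (Y - 1) <> 0) by (apply Rmult_integral_contrapositive; split; lra).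
    apply Rsqr_pos_lt in H. unfold Rsqr in H. simpl. lra. }
  assert (P3 : 0 < (p * u * (X - 1)) * (u * (X * Y - 1)) * ((1 - p) * u * (Y - 1))).
  { apply Rmult_lt_0_compat; [apply Rmult_lt_0_compat|]; assumption. }
  split; intro HZ.
  - assert (0 <= T).
    { destruct (Rle_lt_dec 0 T) as [|hT]; auto. exfalso.
      assert (T * ((1 - p) ^ 2 * u ^ 4) < 0) by (apply Rmult_neg_pos; lra).
      assert (0 <= (p * u * (X - 1)) * (u * (X * Y - 1)) * ((1 - p) * u * (Y - 1)) * ((1 - p) * u * K)) by (apply Rmult_le_pos; lra).
      lra. }
    assert (0 <= T / (2 * ((X - 1) * (Y - 1)) ^ 2)) by (apply Rdiv_le_0_compat; lra).
    lra.
  - assert (T <= 0).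
    { destruct (Rle_lt_dec T 0) as [|hT]; auto. exfalso.
      assert (0 < T * ((1 - p) ^ 2 * u ^ 4)) by (apply Rmult_lt_0_compat; lra).
      assert (0 <= (p * u * (X - 1)) * (u * (X * Y - 1)) * ((1 - p) * u * (Y - 1)) * (- ((1 - p) * u * K))) by (apply Rmult_le_pos; lra).
      lra. }
    assert (0 <= - T / (2 * ((X - 1) * (Y - 1)) ^ 2)) by (apply Rdiv_le_0_compat; lra).
    unfold Rdiv in *. rewrite Ropp_mult_distr_l_reverse in H0. lra.
Qed.

Lemma Kid p u :
  2 * (1 - p) * (exp (p * u) * exp ((1 - p) * u) - 1) - (exp (p * u) + 1) * (exp ((1 - p) * u) - 1)
  = exp (u / 2) * GG (1 - 2 * p) (u / 2).
Proof.
  replace (p * u) with (u / 2 + - ((1 - 2 * p) * (u / 2))) by field.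
  replace ((1 - p) * u) with (u / 2 + ((1 - 2 * p) * (u / 2))) by field.
  unfold GG, EE. rewrite !exp_plus, !exp_Ropp.
  assert (exp (u/2) > 0) by apply exp_pos. assert (exp ((1 - 2 * p) * (u / 2)) > 0) by apply exp_pos.
  field. lra.
Qed.

Theorem theorem3p1 (x p : R) (hx : 0 < x) :
  ((0 <= p <= 1/2) -> WYD p x >= Ahat p x) /\
  (~ (0 < p < 1/2) -> WYD p x <= Ahat p x).
Proof.
  unfold WYD, Ahat.
  destruct (Req_EM_T x 1) as [h1|h1]; [lra|].
  destruct (Req_EM_T p 0) as [hp0|hp0]; [lra|].
  set (u := ln x).
  assert (hxu : x = exp u) by (unfold u; rewrite exp_ln; auto).
  assert (hu : u <> 0) by (intro E; apply h1; rewrite hxu, E, exp_0; reflexivity).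
  destruct (Req_EM_T p 1) as [hp1|hp1].
  - subst p. split; [lra|]. intros _.
    rewrite Rpower_1 by auto.
    pose proof (HH_sign (u/2)) as HS.
    assert (E1 : x - 1 = exp (u/2) * EE (u/2)).
    { unfold EE. rewrite hxu, exp_Ropp. replace u with (u/2 + u/2) at 1 by field. rewrite exp_plus.
      assert (exp (u/2) > 0) by apply exp_pos. field. lra. }
    assert (E2 : x + 1 = exp (u/2) * CC (u/2)).
    { unfold CC. rewrite hxu, exp_Ropp. replace u with (u/2 + u/2) at 1 by field. rewrite exp_plus.
      assert (exp (u/2) > 0) by apply exp_pos. field. lra. }
    assert (hx1 : x - 1 <> 0) by lra.
    assert (D : 1 * (x + 1) * (x - 1) / (2 * (x - 1)) - (x - 1) / u
               = exp (u/2) * ((u/2) * HH (u/2)) / (2 * ((u/2) * (u/2)))).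
    { assert (EE (u/2) <> 0) by (intro Z; apply hx1; rewrite E1, Z; ring).
      assert (exp (u/2) <> 0) by (apply Rgt_not_eq, exp_pos).
      rewrite E1, E2. unfold HH. field. lra. }
    assert (0 < (u/2) * (u/2)) by (apply Rsqr_pos_lt; lra).
    assert (0 < exp (u/2)) by apply exp_pos.
    assert (0 <= exp (u/2) * ((u/2) * HH (u/2)) / (2 * ((u/2) * (u/2)))).
    { apply Rdiv_le_0_compat; [apply Rmult_le_pos|]; lra. }
    lra.
  - unfold Rpower. fold u.
    assert (hxy : x = exp (p * u) * exp ((1 - p) * u)) by (rewrite <- exp_plus, hxu; f_equal; ring).
    assert (ha := exp_m1_sign (p * u) ltac:(intro; apply Rmult_integral in H; lra)).
    assert (hc := exp_m1_sign ((1 - p) * u) ltac:(intro; apply Rmult_integral in H; lra)).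
    assert (hb := exp_m1_sign u hu).
    assert (hX : exp (p * u) <> 1).
    { intro E. rewrite E in ha. lra. }
    assert (hY : exp ((1 - p) * u) <> 1).
    { intro E. rewrite E in hc. lra. }
    rewrite <- hxu in hb. rewrite hxy in hb.
    destruct (alg p u (exp (p * u)) (exp ((1 - p) * u)) hp0 hp1 hu hX hY
      ltac:(exact ha) ltac:(exact hb) ltac:(exact hc)) as [P1 P2].
    rewrite Kid in P1, P2. rewrite <- hxy in P1, P2.
    set (s := u / 2) in *. set (b := 1 - 2 * p) in *.
    assert (hu2 : u = 2 * s) by (unfold s; field).
    assert (ZE : (1 - p) * u * (exp s * GG b s) = (1 + b) * exp s * (s * GG b s)) by (unfold b; rewrite hu2; ring).
    rewrite ZE in P1, P2.
    assert (es : 0 < exp s) by apply exp_pos.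
    split; intro hp.
    + apply P1. pose proof (sgn1 b s ltac:(unfold b; lra)).
      apply Rmult_le_pos; [apply Rmult_le_pos|]; unfold b in *; lra.
    + apply P2.
      destruct (Rlt_le_dec p 0) as [hn|hn].
      * pose proof (sgn2 b s ltac:(unfold b; lra)).
        assert (0 <= (1 + b) * exp s) by (apply Rmult_le_pos; unfold b; lra). nra.
      * assert (hp2 : 1/2 <= p) by lra.
        destruct (Rlt_le_dec p 1) as [hl|hl].
        -- pose proof (sgn1 (- b) s ltac:(unfold b; lra)). rewrite GG_odd_b in H.
           assert (0 <= (1 + b) * exp s) by (apply Rmult_le_pos; unfold b; lra). nra.
        -- pose proof (sgn2 (- b) s ltac:(unfold b; lra)). rewrite GG_odd_b in H.
           assert ((1 + b) * exp s <= 0).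
           { assert (0 <= (- (1 + b)) * exp s) by (apply Rmult_le_pos; unfold b; lra). lra. }
           nra.
Qed.
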